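(* For every $n\ge 3$, let $G_n$ be the directed graph with nodes $0,1,\dots,n-1$ and arcs $i\to i+1$ for $0\le i\le n-2$ together with $j\to 1$ for $2\le j\le n-1$. Then $R(G_n)=1$.
   Context: $d_G(x,y)$ is the shortest directed path length from $x$ to $y$ ($\infty$ if none). The distance-count matrix $C_G\in\mathbb{R}^{n\times n}$ of a graph with $n$ nodes has $(C_G)_{i,k}=|\{j: d_G(j,i)=k\}|$. For $\mathbf a\in\mathbb{R}^{\mathbb{N}}$ (with $a_0$ arbitrary) the linear centrality is $f^{\mathbf a}_G(i)=\sum_{k=0}^{n-1}(C_G)_{i,k}a_k$. A permutation $\pi$ of $\{0,\dots,n-1\}$ is representable by $G$ if there is $\mathbf a\in\mathbb{R}^{\mathbb{N}}$ such that $f^{\mathbf a}_G(\pi(0))>f^{\mathbf a}_G(\pi(1))>\dots>f^{\mathbf a}_G(\pi(n-1))$. The representativeness of $G$ is $R(G)=|\{\pi\in S_n:\pi\text{ representable by }G\}|/n!$. *)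

(* Defs.v *)
From HB Require Import structures.
From mathcomp Require Import all_boot all_order all_algebra all_fingroup.
From mathcomp Require Import boolp.
From mathcomp Require Import Rstruct.
From Stdlib Require Import Reals.
Set Implicit Arguments. Unset Strict Implicit. Unset Printing Implicit Defensive.
Import Order.TTheory GRing.Theory Num.Theory.
Local Open Scope ring_scope.

Definition walk_len {n : nat} (e : rel 'I_n) (k : nat) (x y : 'I_n) : bool :=
  [exists p : k.-tuple 'I_n, path e x p && (last x p == y)].

Definition dist_eq {n : nat} (e : rel 'I_n) (x y : 'I_n) (k : nat) : bool :=
  walk_len e k x y && [forall j : 'I_k, ~~ walk_len e j x y].

Definition dcount {n : nat} (e : rel 'I_n) (i : 'I_n) (k : nat) : nat :=
  #|[set j : 'I_n | dist_eq e j i k]|.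

Definition lin_centrality {n : nat} (e : rel 'I_n) (a : nat -> R) (i : 'I_n) : R :=
  \sum_(k < n) (dcount e i k)%:R * a k.

Definition representable {n : nat} (e : rel 'I_n) (pi : 'S_n) : Prop :=
  exists a : nat -> R, forall i j : 'I_n, nat_of_ord j = (nat_of_ord i).+1 ->
    lin_centrality e a (pi j) < lin_centrality e a (pi i).

Definition representativeness {n : nat} (e : rel 'I_n) : rat :=
  (#|[set pi : 'S_n | `[< representable e pi >]]|)%:R / (n`!)%:R.

Definition Gn (n : nat) : rel 'I_n :=
  fun i j => ((nat_of_ord j == (nat_of_ord i).+1)
             || (leq 2 (nat_of_ord i) && (nat_of_ord j == 1)))%N.
Arguments Gn n : clear implicits.

(* Main.v *)
Require Import Defs.
From mathcomp Require Import all_boot all_algebra.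
From HB Require Import structures.
From mathcomp Require Import all_order all_fingroup boolp zify.
From mathcomp Require Import Rstruct.
From Stdlib Require Rdefinitions.
Local Notation R := Rdefinitions.R.
Set Implicit Arguments. Unset Strict Implicit. Unset Printing Implicit Defensive.
Import Order.TTheory GRing.Theory Num.Theory.

Section G.
Variable n : nat.


Lemma walk0 (e : rel 'I_n) x : walk_len e 0 x x.
Proof. by apply/existsP; exists (in_tuple [::]) => /=. Qed.

Lemma walk_cons (e : rel 'I_n) k x y z :
  e x y -> walk_len e k y z -> walk_len e k.+1 x z.
Proof.
move=> exy /existsP [p /andP [hp hl]]; apply/existsP; exists (cons_tuple y p).
by rewrite /= exy hp.
Qed.

Lemma walk_up (x : 'I_n) : forall d (j : 'I_n), (j + d)%nat = x -> walk_len (Gn n) d j x.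
Proof.
elim=> [|d IH] j hj.
  have -> : j = x by apply/val_inj; rewrite /= -hj addn0.
  exact: walk0.
have hj1 : (j.+1 < n)%nat by have := ltn_ord x; lia.
apply: (@walk_cons _ _ _ (Ordinal hj1)); first by rewrite /Gn /= eqxx.
by apply: IH => /=; lia.
Qed.

Lemma walk_to (x j : 'I_n) : (0 < x)%nat -> exists2 m, (m <= x)%nat & walk_len (Gn n) m j x.
Proof.
move=> hx; case: (leqP j x) => hjx.
  by exists (x - j)%nat; [apply: leq_subr | apply: walk_up; lia].
have h1 : (1 < n)%nat by have := ltn_ord x; lia.
exists x => //; have -> : x = (x - 1).+1 :> nat by lia.
apply: (@walk_cons _ _ _ (Ordinal h1)).
  by rewrite /Gn /= eqxx andbT orbC /=; lia.
by apply: walk_up => /=; lia.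
Qed.

Lemma last_le : forall p (x : 'I_n), path (Gn n) x p -> (last x p <= x + size p)%nat.
Proof.
elim=> [|y p IH] x /=; first by rewrite addn0.
move=> /andP [hxy hp]; have := IH _ hp; move: hxy; rewrite /Gn.
case/orP => [/eqP|/andP [_ /eqP]] h; lia.
Qed.

Lemma last_nz : forall p (x : 'I_n), path (Gn n) x p -> p != [::] -> (last x p != 0 :> nat).
Proof.
elim=> [|y p IH] x //= /andP [hxy hp] _.
case: p IH hp => [|z p] IH hp /=.
  by move: hxy; rewrite /Gn; case/orP => [/eqP|/andP [_ /eqP]] ->.
by apply: (IH y hp).
Qed.

Lemma dist_big (x j : 'I_n) k : (x < k)%nat -> ~~ dist_eq (Gn n) j x k.
Proof.
move=> hk; rewrite /dist_eq negb_and; case: (posnP x) => hx.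
  apply/orP; left; apply/negP => /existsP [p /andP [hp /eqP hl]].
  have hne : (p : seq _) != [::].
    by apply/eqP => hp0; have := size_tuple p; rewrite hp0 /=; lia.
  by have := last_nz hp hne; rewrite hl hx.
apply/orP; right; have [m hm hw] := walk_to j hx.
have hmk : (m < k)%nat by lia.
by apply/forallP => /(_ (Ordinal hmk)) /=; rewrite hw.
Qed.

Lemma dist_diag (x : 'I_n) (z : 'I_n) : val z = 0%N -> dist_eq (Gn n) z x x.
Proof.
move=> hz; rewrite /dist_eq walk_up /=; last by rewrite hz.
apply/forallP => m; apply/negP => /existsP [p /andP [hp /eqP hl]].
have := last_le hp; rewrite hl size_tuple hz; have := ltn_ord m; lia.
Qed.

Lemma dcount0 (x : 'I_n) k : (x < k)%nat -> dcount (Gn n) x k = 0%N.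
Proof.
move=> hk; apply/eqP; rewrite cards_eq0; apply/eqP/setP => j.
by rewrite inE in_set0; apply/negbTE/dist_big.
Qed.

Lemma dcount_pos (x : 'I_n) : (0 < dcount (Gn n) x x)%nat.
Proof.
have h0 : (0 < n)%nat by have := ltn_ord x; lia.
rewrite card_gt0; apply/set0Pn; exists (Ordinal h0); rewrite inE.
exact: dist_diag.
Qed.

Local Open Scope ring_scope.

Lemma lc_formula (a : nat -> R) (x : 'I_n) :
  lin_centrality (Gn n) a x =
  \sum_(k < x) (dcount (Gn n) x k)%:R * a k + (dcount (Gn n) x x)%:R * a x.
Proof.
rewrite /lin_centrality -(big_mkord xpredT (fun k => (dcount (Gn n) x k)%:R * a k)).
rewrite (@big_cat_nat _ _ _ x.+1) //=.
have -> : \sum_(x.+1 <= i < n) (dcount (Gn n) x i)%:R * a i = 0.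
  rewrite big_nat_cond big1 // => k /andP [/andP [hk _] _].
  by rewrite dcount0 // mul0r.
rewrite addr0.
by rewrite big_nat_recr //= big_mkord.
Qed.

Lemma lc_ext (a b : nat -> R) (x : 'I_n) :
  (forall k : nat, (k <= x)%nat -> a k = b k) ->
  lin_centrality (Gn n) a x = lin_centrality (Gn n) b x.
Proof.
move=> h; rewrite !lc_formula h //; congr (_ + _).
by apply: eq_bigr => k _; rewrite h // ltnW.
Qed.

Lemma solve (v : 'I_n -> R) N : (N <= n)%nat ->
  exists a : nat -> R, forall x : 'I_n, (x < N)%nat -> lin_centrality (Gn n) a x = v x.
Proof.
elim: N => [|N IH] hN; first by exists (fun _ => 0).
have [a ha] := IH (ltnW hN).
pose xN : 'I_n := Ordinal hN.
pose c k := (dcount (Gn n) xN k)%:R : R.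
pose a' := fun k => if k == N then (v xN - \sum_(k < N) c k * a k) / c N else a k.
exists a' => x hx; case: (ltngtP x N) => hxN.
- rewrite -ha //; apply: lc_ext => k hk; rewrite /a'.
  by have -> : (k == N) = false by apply/negbTE; lia.
- lia.
have -> : x = xN by apply/val_inj.
rewrite lc_formula.
have -> : \sum_(k < xN) (dcount (Gn n) xN k)%:R * a' k = \sum_(k < N) c k * a k.
  apply: eq_bigr => k _; rewrite /a'.
  have -> : (k == N :> nat) = false.
    by apply/negbTE/negP => /eqP hk; have := ltn_ord k; rewrite hk /= ltnn.
  by [].
rewrite /a' /= eqxx mulrC divfK; first by rewrite addrC subrK.
by rewrite /c pnatr_eq0 -lt0n; apply: dcount_pos.
Qed.

End G.

Theorem theorem5 (n : nat) : (3 <= n)%N -> representativeness (Gn n) = 1%R.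
Proof.
move=> hn; rewrite /representativeness.
have -> : [set pi : 'S_n | `[< representable (Gn n) pi >]] = setT.
  apply/setP => pi; rewrite !inE; apply/asboolP.
  have [a ha] := solve (fun y => - (((pi^-1)%g y : nat)%:R : R))%R (leqnn n).
  exists a => i j hij; rewrite !ha ?ltn_ord // !permK ltrN2 ltr_nat hij.
  exact: ltnSn.
rewrite cardsT card_Sn divff // pnatr_eq0 -lt0n; exact: fact_gt0.
Qed.
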